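(* Let $k\in\mathbb N$ and let $\mathbb D_0=(D_0,V_0)$, $\mathbb D_1=(D_1,V_1)$ be monadic models. The following are equivalent: (1) $\mathbb D_0$ and $\mathbb D_1$ satisfy exactly the same $\mathrm{FOE}^\infty(A)$-sentences of quantifier rank at most $k$; (2) $\mathbb D_0\sim^\infty_k\mathbb D_1$; (3) player $\exists$ has a winning strategy in the game $\mathrm{EF}^\infty_k(\mathbb D_0,\mathbb D_1)$.
   Context: Fix a finite set $A$ of unary predicate symbols. A monadic model is a pair $(D,V)$ with $D$ a set (possibly empty) and $V:A\to\wp(D)$. $\mathrm{FOE}^\infty(A)$ is monadic first-order logic with equality over $A$ extended with the quantifiers $\exists^\infty$ (''there are infinitely many'') and $\forall^\infty$ (''all but finitely many''), formulas in negation normal form. On nonempty models the semantics is standard; on the empty model a sentence $Qx.\varphi$ is false for $Q\in\{\exists,\exists^\infty\}$ and true for $Q\in\{\forall,\forall^\infty\}$. Quantifier rank counts nested quantifiers of all four kinds. For $S\subseteq A$, $|S|_{\mathbb D}$ is the number of elements $d$ with $\{a:d\in V(a)\}=S$. The relation $\sim^\infty_0$ relates all models; for $k\ge1$, $\mathbb D\sim^\infty_k\mathbb D'$ iff for every $S\subseteq A$: $|S|_{\mathbb D}=|S|_{\mathbb D'}<k$, or $k\le|S|_{\mathbb D},|S|_{\mathbb D'}<\omega$, or both $|S|_{\mathbb D},|S|_{\mathbb D'}$ are infinite. A partial isomorphism is an injective partial map $f:D_0\rightharpoonup D_1$ with $d\in V_0(a)\iff f(d)\in V_1(a)$ for all $a$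 and $d$ in its domain. The game $\mathrm{EF}^\infty_k(\mathbb D_0,\mathbb D_1)$ has $k$ rounds, positions being pairs of equal-length sequences $\vec s_0,\vec s_1$ (initially empty). In each round $\forall$ chooses either (a) a second-order move: $\forall$ picks an infinite $X_i\subseteq D_i$ in one model, $\exists$ responds with an infinite $X_{1-i}\subseteq D_{1-i}$, $\forall$ picks $d_{1-i}\in X_{1-i}$, and $\exists$ responds with $d_i\in X_i$; or (b) a first-order move: $\forall$ picks $d_i\in D_i$ and $\exists$ responds with $d_{1-i}\in D_{1-i}$. The sequences are extended by $d_0$ resp. $d_1$; $\exists$ survives the round if she is not stuck and the map $\vec s_0\mapsto\vec s_1$ (componentwise) is a well-defined partial isomorphism; she wins if she survives all $k$ rounds. *)

(* Defs.v *)
From mathcomp Require Import all_boot.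
From Stdlib Require Import List.
Set Implicit Arguments. Unset Strict Implicit. Unset Printing Implicit Defensive.

Definition finite_pred (D : Type) (P : D -> Prop) : Prop :=
  exists l : list D, forall x, P x -> List.In x l.
Definition infinite_pred (D : Type) (P : D -> Prop) : Prop := ~ finite_pred P.
Definition card_is (D : Type) (P : D -> Prop) (n : nat) : Prop :=
  exists l : list D, List.NoDup l /\ (forall x, P x <-> List.In x l) /\ List.length l = n.

Record model (A : finType) := Model { dom : Type; pval : A -> dom -> Prop }.
Arguments dom {A} m.
Arguments pval {A} m a d.
Arguments Model {A}.

Definition of_type (A : finType) (M : model A) (S : {set A}) (d : dom M) : Prop :=
  forall a : A, pval M a d <-> a \in S.
Arguments of_type {A} M S d.

(* ---------- FOE^oo(A) in negation normal form, de Bruijn variables ---------- *)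
Inductive form (A : Type) : Type :=
| FTrue | FFalse
| FAtom (a : A) (x : nat) | FNAtom (a : A) (x : nat)
| FEq (x y : nat) | FNeq (x y : nat)
| FAnd (p q : form A) | FOr (p q : form A)
| FEx (p : form A) | FAll (p : form A)
| FExInf (p : form A) | FAllInf (p : form A).
Arguments FTrue {A}. Arguments FFalse {A}.

Fixpoint wf (A : Type) (n : nat) (p : form A) : bool :=
  match p with
  | FTrue | FFalse => true
  | FAtom _ x | FNAtom _ x => x < n
  | FEq x y | FNeq x y => (x < n) && (y < n)
  | FAnd p q | FOr p q => wf n p && wf n q
  | FEx p | FAll p | FExInf p | FAllInf p => wf n.+1 p
  end.
Definition sentence (A : Type) (p : form A) : bool := wf 0 p.

Fixpoint qrank (A : Type) (p : form A) : nat :=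
  match p with
  | FTrue | FFalse | FAtom _ _ | FNAtom _ _ | FEq _ _ | FNeq _ _ => 0
  | FAnd p q | FOr p q => maxn (qrank p) (qrank q)
  | FEx p | FAll p | FExInf p | FAllInf p => (qrank p).+1
  end.

(* Satisfaction; env lists the values of de Bruijn variables 0,1,2,... *)
Fixpoint sat (A : finType) (M : model A) (env : list (dom M)) (p : form A) : Prop :=
  match p with
  | FTrue => True
  | FFalse => False
  | FAtom a x => match nth_error env x with Some d => pval M a d | None => False end
  | FNAtom a x => match nth_error env x with Some d => ~ pval M a d | None => False end
  | FEq x y => match nth_error env x, nth_error env y with
               | Some d, Some e => d = e | _, _ => False end
  | FNeq x y => match nth_error env x, nth_error env y with
               | Some d, Some e => d <> e | _, _ => False end
  | FAnd p q => sat env p /\ sat env q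
  | FOr p q => sat env p \/ sat env q
  | FEx p => exists d, sat (d :: env) p
  | FAll p => forall d, sat (d :: env) p
  | FExInf p => infinite_pred (fun d => sat (d :: env) p)
  | FAllInf p => finite_pred (fun d => ~ sat (d :: env) p)
  end.

Arguments sat {A} M env p.

Definition rank_equiv (A : finType) (k : nat) (M N : model A) : Prop :=
  forall p : form A, sentence p -> qrank p <= k -> (sat M nil p <-> sat N nil p).

Definition sim_inf (A : finType) (k : nat) (M N : model A) : Prop :=
  match k with
  | 0 => True
  | _ =>
    forall S : {set A},
      (exists n, n < k /\ card_is (of_type M S) n /\ card_is (of_type N S) n) \/
      (exists n m, k <= n /\ k <= m /\ card_is (of_type M S) n /\ card_is (of_type N S) m) \/
      (infinite_pred (of_type M S) /\ infinite_pred (of_type N S))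
  end.

Definition piso (A : finType) (M N : model A) (s : list (dom M)) (t : list (dom N)) : Prop :=
  List.length s = List.length t /\
  (forall i j d d' e e', nth_error s i = Some d -> nth_error s j = Some d' ->
      nth_error t i = Some e -> nth_error t j = Some e' -> (d = d' <-> e = e')) /\
  (forall i d e, nth_error s i = Some d -> nth_error t i = Some e ->
      forall a, pval M a d <-> pval N a e).

Arguments piso {A} M N s t.

(* ef_win M N n s t : player E has a winning strategy in the remaining n rounds
   from position (s, t); each new pair is added to the front of both sequences. *)
Fixpoint ef_win (A : finType) (M N : model A) (n : nat)
    (s : list (dom M)) (t : list (dom N)) : Prop :=
  match n with
  | 0 => True
  | n'.+1 =>
    (forall d : dom M, exists e : dom N,
        piso M N (d :: s) (e :: t) /\ ef_win n' (d :: s) (e :: t)) /\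
    (forall e : dom N, exists d : dom M,
        piso M N (d :: s) (e :: t) /\ ef_win n' (d :: s) (e :: t)) /\
    (forall X : dom M -> Prop, infinite_pred X ->
       exists Y : dom N -> Prop, infinite_pred Y /\
         forall e, Y e -> exists d, X d /\
           piso M N (d :: s) (e :: t) /\ ef_win n' (d :: s) (e :: t)) /\
    (forall Y : dom N -> Prop, infinite_pred Y ->
       exists X : dom M -> Prop, infinite_pred X /\
         forall d, X d -> exists e, Y e /\
           piso M N (d :: s) (e :: t) /\ ef_win n' (d :: s) (e :: t))
  end.

Arguments ef_win {A} M N n s t.

Definition E_wins (A : finType) (k : nat) (M N : model A) : Prop :=
  ef_win M N k nil nil.

(* Main.v *)
Require Import Defs.
From Stdlib Require Import List Classical ClassicalDescription FunctionalExtensionality PropExtensionality Lia.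
From mathcomp Require Import all_boot zify.
Set Implicit Arguments. Unset Strict Implicit.

Section Gen.
Variable D : Type.
Implicit Types P Q : D -> Prop.

Lemma pred_ext P Q : (forall x, P x <-> Q x) -> P = Q.
Proof. move=> H; apply: functional_extensionality => x; apply: propositional_extensionality; exact: H. Qed.

Lemma card_fin P n : card_is P n -> finite_pred P.
Proof. move=> [l [_ [H _]]]. exists l => x /H. done. Qed.

Lemma card_not_inf P n : card_is P n -> ~ infinite_pred P.
Proof. move=> /card_fin H Hi; exact: Hi H. Qed.

Lemma fin_card P : finite_pred P -> exists n, card_is P n.
Proof.
  move=> [l Hl].
  have : exists l', NoDup l' /\ forall x, In x l' <-> (In x l /\ P x).
  { elim: l {Hl} => [|x l [l' [Hnd Hl']]].
    - exists nil; split; [constructor| by move=> x; split => [[]|[[]]]].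
    - case: (classic (P x /\ ~ In x l')) => [[Px Hn]|Hc].
      + exists (x :: l'); split; first by constructor.
        move=> y /=; rewrite Hl'; split.
        * case=> [<-|[? ?]]; [by split; [left|]| by split; [right|]].
        * case=> [[->|?] ?]; [by left | by right].
      + exists l'; split => // y; rewrite Hl'; split.
        * by case=> ? ?; split; [right|].
        * case=> [[Hy|?] Py]; last by [].
          subst y. have Hin : In x l' by apply: NNPP => Hn; apply: Hc.
          by move/Hl': Hin => []. }
  move=> [l' [Hnd Hl']]; exists (length l'), l'; split => //; split => // x.
  rewrite Hl'; split; [move=> Px; split => //; exact: Hl x Px | by case].
Qed.

Lemma fin_or_inf P : (exists n, card_is P n) \/ infinite_pred P.
Proof. case: (classic (finite_pred P)) => H; [left; exact: fin_card | by right]. Qed.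

Lemma inf_nonempty P : infinite_pred P -> exists x, P x.
Proof.
  move=> H; apply: NNPP => Hn; apply: H; exists nil => x Px; apply: Hn; by exists x.
Qed.

Lemma card_pos P n d : card_is P n -> P d -> 0 < n.
Proof. move=> [[|x l] [_ [H <-]]] /H //. Qed.

Lemma card_nonempty P n : card_is P n -> 0 < n -> exists x, P x.
Proof. move=> [[|x l] [_ [H <-]]] //= _. exists x; apply/H; by left. Qed.

Lemma remove_list (d : D) l : NoDup l -> In d l ->
  exists l', NoDup l' /\ (forall x, In x l' <-> In x l /\ x <> d) /\ length l = (length l').+1.
Proof.
  elim: l => [|x l IH] //= /NoDup_cons_iff [Hx Hnd] Hin.
  case: (classic (x = d)) => Hxd.
  - subst x; exists l; split => //; split => // y; split.
    + move=> Hy; split; [by right| by move=> E; subst].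
    + move=> [[E|//] Hne]; exfalso; apply: Hne; by rewrite E.
  - have Hd : In d l by case: Hin.
    have [l' [H1 [H2 H3]]] := IH Hnd Hd.
    exists (x :: l'); split.
    + constructor => //; by move/H2 => [].
    + split; last by rewrite /= H3.
      move=> y /=; rewrite H2; split.
      * case=> [<-|[? ?]]; [by split; [left|]| by split; [right|]].
      * case=> [[->|?] ?]; [by left | by right].
Qed.

Lemma card_remove P n (d : D) : card_is P n -> exists n', card_is (fun x => P x /\ x <> d) n' /\
   (P d -> n = n'.+1) /\ (~ P d -> n' = n).
Proof.
  move=> [l [Hnd [Hl Hn]]].
  case: (classic (P d)) => Pd.
  - have [l' [H1 [H2 H3]]] := remove_list Hnd (proj1 (Hl d) Pd).
    exists (length l'); split; last by split => // _; rewrite -Hn.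
    exists l'; split => //; split => // x; by rewrite H2 Hl.
  - exists n; split; last by split.
    exists l; split => //; split => // x; rewrite -Hl; split; first by case.
    move=> Px; split => // E; subst; exact: Pd.
Qed.

Lemma fin_subset P Q : (forall x, P x -> Q x) -> finite_pred Q -> finite_pred P.
Proof. move=> H [l Hl]; exists l => x /H; exact: Hl. Qed.

Lemma inf_subset P Q : (forall x, P x -> Q x) -> infinite_pred P -> infinite_pred Q.
Proof. move=> H Hi Hf; apply: Hi; exact: fin_subset H Hf. Qed.

Lemma inf_remove P (d : D) : infinite_pred P -> infinite_pred (fun x => P x /\ x <> d).
Proof.
  move=> Hi [l Hl]; apply: Hi; exists (d :: l) => x Px.
  case: (classic (x = d)) => E; [by left | right; exact: Hl].
Qed.

Lemma fin_or P Q : finite_pred P -> finite_pred Q -> finite_pred (fun x => P x \/ Q x).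
Proof.
  move=> [l1 H1] [l2 H2]; exists (l1 ++ l2) => x Hx; apply/in_or_app.
  case: Hx => H; [left; exact: H1 | right; exact: H2].
Qed.

Lemma fin_union (I : Type) (L : list I) (F : I -> D -> Prop) :
  (forall i, In i L -> finite_pred (F i)) -> finite_pred (fun x => exists i, In i L /\ F i x).
Proof.
  elim: L => [|i L IH] H.
  - exists nil => x [i [[] _]].
  - have := fin_or (H i (or_introl erefl)) (IH (fun j Hj => H j (or_intror Hj))).
    apply: fin_subset => x [j [[<-|Hj] Hx]]; [by left | right; by exists j].
Qed.

Lemma take_sub (L : list D) j : NoDup L -> j <= length L ->
  exists l, length l = j /\ NoDup l /\ incl l L.
Proof.
  elim: L j => [|x L IH] [|j] //= Hnd Hj.
  - exists nil; split => //; split; [constructor| by move=> y []].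
  - exists nil; split => //; split; [constructor| by move=> y []].
  - move/NoDup_cons_iff: Hnd => [Hx Hnd].
    have [l [H1 [H2 H3]]] := IH j Hnd Hj.
    exists (x :: l); split; first by rewrite /= H1.
    split; [constructor => // /H3 // | move=> y [<-|/H3]; [left| right]] => //.
Qed.

Lemma atleast_card P n j : card_is P n ->
  ((exists l, length l = j /\ NoDup l /\ forall x, In x l -> P x) <-> j <= n).
Proof.
  move=> [L [Hnd [HL Hn]]]; split.
  - move=> [l [<- [Hl Hx]]]; rewrite -Hn.
    apply/leP; apply: NoDup_incl_length => // y /Hx /HL //.
  - move=> Hj; have [l [H1 [H2 H3]]] := take_sub Hnd (j:=j) ltac:(by rewrite Hn).
    exists l; split => //; split => // x /H3 /HL //.
Qed.

End Gen.

Section Crel.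
Variables D1 D2 : Type.
Implicit Types (P : D1 -> Prop) (Q : D2 -> Prop).

Definition crel r P Q :=
  (exists n, n < r /\ card_is P n /\ card_is Q n) \/
  (exists n m, r <= n /\ r <= m /\ card_is P n /\ card_is Q m) \/
  (infinite_pred P /\ infinite_pred Q).

Lemma crel_nonempty r P Q d : crel r.+1 P Q -> P d -> exists e, Q e.
Proof.
  move=> H Pd; case: H => [[n [? [HP HQ]]]|[[n [m [? [? [HP HQ]]]]]|[_ HQ]]].
  - apply: card_nonempty HQ _; exact: card_pos HP Pd.
  - apply: card_nonempty HQ _; lia.
  - exact: inf_nonempty.
Qed.

Lemma crel_step r P Q (d : D1) (e : D2) : crel r.+1 P Q -> (P d <-> Q e) ->
  crel r (fun x => P x /\ x <> d) (fun x => Q x /\ x <> e).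
Proof.
  move=> H He.
  case: H => [[n [Hn [HP HQ]]]|[[n [m [Hn [Hm [HP HQ]]]]]|[HP HQ]]].
  - have [n1 [HP1 [a1 b1]]] := card_remove d HP.
    have [n2 [HQ2 [a2 b2]]] := card_remove e HQ.
    case: (classic (P d)) => Pd.
    + have Qe : Q e by apply/He.
      have e1 := a1 Pd; have e2 := a2 Qe.
      left; exists n1; split; first lia. split => //. have -> : n1 = n2 by lia. done.
    + have Qe : ~ Q e by move=> /He.
      have e1 := b1 Pd; have e2 := b2 Qe.
      case: (ltnP n r) => Hnr.
      * left; exists n; split => //; by subst.
      * right; left; exists n, n; split => //; split => //; by subst.
  - have [n1 [HP1 [a1 b1]]] := card_remove d HP.
    have [n2 [HQ2 [a2 b2]]] := card_remove e HQ.
    right; left; exists n1, n2; split; last split; last by split.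
    + by case: (classic (P d)) => Pd; [have := a1 Pd| have := b1 Pd]; lia.
    + by case: (classic (Q e)) => Qe; [have := a2 Qe| have := b2 Qe]; lia.
  - by right; right; split; apply: inf_remove.
Qed.

End Crel.

Lemma crel_sym (D1 D2 : Type) r (P : D1 -> Prop) (Q : D2 -> Prop) : crel r P Q -> crel r Q P.
Proof.
  case=> [[n [? [? ?]]]|[[n [m [? [? [? ?]]]]]|[? ?]]].
  - left; by exists n.
  - right; left; by exists m, n.
  - by right; right.
Qed.


Lemma inseqP (T : eqType) (x : T) (l : seq T) : x \in l -> In x l.
Proof.
  elim: l => [|y l IH] //=; rewrite in_cons => /orP [/eqP ->|H]; [by left| right; exact: IH].
Qed.

Section Models.
Variable A : finType.
Implicit Types M N : model A.

Definition U (M : model A) (s : list (dom M)) (S : {set A}) :=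
  fun x => of_type M S x /\ ~ In x s.
Arguments U : clear implicits.

Lemma U_cons M s d S : U M (d :: s) S = fun x => U M s S x /\ x <> d.
Proof.
  apply: pred_ext => x; rewrite /U /=; split.
  - move=> [H1 H2]; split; [split => // H; apply: H2; by right| move=> E; apply: H2; by left].
  - move=> [[H1 H2] H3]; split => // [[E|//]]; by apply: H3.
Qed.

Definition tyof (M : model A) (d : dom M) : {set A} :=
  [set a | if excluded_middle_informative (pval M a d) then true else false].

Lemma tyof_spec M d : of_type M (tyof d) d.
Proof. move=> a; rewrite inE; case: excluded_middle_informative => H; split => //. Qed.

Lemma of_type_uniq M S T d : of_type M S d -> of_type M T d -> S = T.
Proof. move=> HS HT; apply/setP => a; apply/idP/idP => H; [apply/HT/HS | apply/HS/HT] => //. Qed.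

Lemma piso_sym M N s t : piso M N s t -> piso N M t s.
Proof.
  move=> [H1 [H2 H3]]; split => //; split.
  - move=> i j d d' e e' H4 H5 H6 H7; have := H2 i j e e' d d' H6 H7 H4 H5; tauto.
  - move=> i d e H4 H5 a; have := H3 i e d H5 H4 a; tauto.
Qed.

Lemma piso_nth M N s t : piso M N s t -> forall x,
  (nth_error s x = None /\ nth_error t x = None) \/
  exists d e, nth_error s x = Some d /\ nth_error t x = Some e.
Proof.
  move=> [Hl _] x.
  case Es: (nth_error s x) => [d|]; case Et: (nth_error t x) => [e|].
  - right; by exists d, e.
  - move/nth_error_None: Et; have : nth_error s x <> None by rewrite Es.
    move/nth_error_Some; lia.
  - move/nth_error_None: Es; have : nth_error t x <> None by rewrite Et.
    move/nth_error_Some; lia.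
  - by left.
Qed.

Lemma piso_fresh M N s t d e : piso M N s t -> ~ In d s -> ~ In e t ->
  (forall a, pval M a d <-> pval N a e) -> piso M N (d :: s) (e :: t).
Proof.
  move=> [H1 [H2 H3]] Hd He Ha; split; first by rewrite /= H1.
  split.
  - move=> [|i] [|j] x x' y y' /=.
    + by move=> [<-] [<-] [<-] [<-].
    + move=> [E1] Hx [E2] Hy; subst.
      have Hx' := nth_error_In _ _ Hx; have Hy' := nth_error_In _ _ Hy.
      by split => E; subst.
    + move=> Hx [E1] Hy [E2]; subst.
      have Hx' := nth_error_In _ _ Hx; have Hy' := nth_error_In _ _ Hy.
      by split => E; subst.
    + exact: H2.
  - move=> [|i] x y /=; [by move=> [<-] [<-] | exact: H3].
Qed.

Lemma piso_peb M N s t i d e : piso M N s t -> nth_error s i = Some d ->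
  nth_error t i = Some e -> piso M N (d :: s) (e :: t).
Proof.
  move=> [H1 [H2 H3]] Hd He; split; first by rewrite /= H1.
  split.
  - move=> [|i'] [|j] x x' y y' /=.
    + by move=> [<-] [<-] [<-] [<-].
    + move=> [<-] Hx [<-] Hy; exact: H2 Hd Hx He Hy.
    + move=> Hx [<-] Hy [<-]; exact: H2 Hx Hd Hy He.
    + exact: H2.
  - move=> [|i'] x y /=; [move=> [<-] [<-]; exact: H3 Hd He | exact: H3].
Qed.

Definition rels (M N : model A) r s t := forall S, crel r (U M s S) (U N t S).
Arguments rels : clear implicits.

Lemma fresh_cond M N s t S d e : U M s S d -> U N t S e ->
  forall T, U M s T d <-> U N t T e.
Proof.
  move=> [Hd Hds] [He Het] T; split.
  - move=> [HT _]; rewrite (of_type_uniq HT Hd); by split.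
  - move=> [HT _]; rewrite (of_type_uniq HT He); by split.
Qed.

Lemma fresh_piso M N s t S d e : piso M N s t -> U M s S d -> U N t S e ->
  piso M N (d :: s) (e :: t).
Proof.
  move=> Hp [Hd Hds] [He Het]; apply: piso_fresh => // a.
  by rewrite Hd He.
Qed.

Lemma fo_resp M N r s t d : piso M N s t -> rels M N r.+1 s t ->
  exists e, piso M N (d :: s) (e :: t) /\ forall T, U M s T d <-> U N t T e.
Proof.
  move=> Hp Hr.
  case: (classic (In d s)) => Hin.
  - have [i Hi] := In_nth_error _ _ Hin.
    case: (piso_nth Hp i) => [[E _]|[d' [e [Hd He]]]]; first by rewrite Hi in E.
    exists e; split; first exact: piso_peb Hp Hi He.
    move=> T; split; [by move=> [_ []] | move=> [_ []]; exact: nth_error_In He].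
  - have Hu : U M s (tyof d) d by split => //; exact: tyof_spec.
    have [e He] := crel_nonempty (Hr (tyof d)) Hu.
    exists e; split; [exact: fresh_piso Hp Hu He | exact: fresh_cond Hu He].
Qed.

Lemma so_resp M N r s t (X : dom M -> Prop) : piso M N s t -> rels M N r.+1 s t ->
  infinite_pred X -> exists Y : dom N -> Prop, infinite_pred Y /\ forall e, Y e ->
  exists d, X d /\ piso M N (d :: s) (e :: t) /\ forall T, U M s T d <-> U N t T e.
Proof.
  move=> Hp Hr HX.
  have [S HS] : exists S, infinite_pred (fun x => X x /\ U M s S x).
  { apply: NNPP => Hn; apply: HX.
    have Hf : forall S, finite_pred (fun x => X x /\ U M s S x).
    { move=> S; apply: NNPP => H; apply: Hn; by exists S. }
    have := fin_or (P := fun x => In x s) (ex_intro _ s (fun x H => H))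
      (fin_union (L := index_enum {set A}) (fun S _ => Hf S)).
    apply: fin_subset => x Hx.
    case: (classic (In x s)) => Hin; [by left | right].
    exists (tyof x); split; first by apply: inseqP; rewrite mem_index_enum.
    split => //; split => //; exact: tyof_spec. }
  have HQ : infinite_pred (U N t S).
  { case: (Hr S) => [[n [_ [HP _]]]|[[n [m [_ [_ [HP _]]]]]|[_ //]]];
    by case: (card_not_inf HP); apply: inf_subset HS => x [].  }
  exists (U N t S); split => // e He.
  have [d [Xd Hd]] := inf_nonempty HS.
  exists d; split => //; split; [exact: fresh_piso Hp Hd He | exact: fresh_cond Hd He].
Qed.

Lemma rels_sym M N r s t : rels M N r s t -> rels N M r t s.
Proof. move=> H S; exact: crel_sym. Qed.

Lemma strat M N r : forall s t, piso M N s t -> rels M N r s t -> ef_win M N r s t.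
Proof.
  elim: r => [//|r IH] s t Hp Hr.
  have step : forall d e, piso M N (d :: s) (e :: t) ->
      (forall T, U M s T d <-> U N t T e) -> ef_win M N r (d :: s) (e :: t).
  { move=> d e Hp' HT; apply: IH => // T; rewrite !U_cons; exact: crel_step (Hr T) (HT T). }
  split; [|split; [|split]].
  - move=> d; have [e [H1 H2]] := fo_resp d Hp Hr; exists e; split => //; exact: step.
  - move=> e; have [d [H1 H2]] := fo_resp e (piso_sym Hp) (rels_sym Hr).
    exists d; split; [exact: piso_sym | apply: step; [exact: piso_sym | move=> T; by rewrite H2]].
  - move=> X HX; have [Y [HY H]] := so_resp Hp Hr HX; exists Y; split => // e /H [d [? [? ?]]].
    exists d; split => //; split => //; exact: step.
  - move=> Y HY; have [X [HX H]] := so_resp (piso_sym Hp) (rels_sym Hr) HY; exists X; split => // d /H [e [? [? H2]]].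
    exists e; split => //; split; [exact: piso_sym | apply: step; [exact: piso_sym | move=> T; by rewrite H2]].
Qed.

End Models.

Section Sat.
Variable A : finType.
Implicit Types M N : model A.

Lemma game_sat M N (p : form A) : forall r s t, piso M N s t -> ef_win M N r s t ->
  qrank p <= r -> (sat M s p <-> sat N t p).
Proof.
  elim: p => [|| a x | a x | x y | x y | p IHp q IHq | p IHp q IHq | p IHp | p IHp | p IHp | p IHp]
    r s t Hp Hw /= Hr.
  - done.
  - done.
  - case: (piso_nth Hp x) => [[-> ->] //|[d [e [Hd He]]]]; rewrite Hd He.
    exact (proj2 (proj2 Hp) x d e Hd He a).
  - case: (piso_nth Hp x) => [[-> ->] //|[d [e [Hd He]]]]; rewrite Hd He.
    have := (proj2 (proj2 Hp)) x d e Hd He a; tauto.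
  - case: (piso_nth Hp x) => [[-> ->] //|[d [e [Hd He]]]]; rewrite Hd He.
    case: (piso_nth Hp y) => [[-> ->] //|[d' [e' [Hd' He']]]]; rewrite Hd' He'.
    exact (proj1 (proj2 Hp) _ _ _ _ _ _ Hd Hd' He He').
  - case: (piso_nth Hp x) => [[-> ->] //|[d [e [Hd He]]]]; rewrite Hd He.
    case: (piso_nth Hp y) => [[-> ->] //|[d' [e' [Hd' He']]]]; rewrite Hd' He'.
    have := (proj1 (proj2 Hp)) _ _ _ _ _ _ Hd Hd' He He'; tauto.
  - rewrite (IHp r s t) // ?(IHq r s t) //; lia.
  - rewrite (IHp r s t) // ?(IHq r s t) //; lia.
  - case: r Hw Hr => [//|r] [H1 [H2 [H3 H4]]] Hr; split.
    + move=> [d Hd]; have [e [He1 He2]] := H1 d; exists e; apply/(IHp r _ _ He1 He2) => //.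
    + move=> [e He]; have [d [Hd1 Hd2]] := H2 e; exists d; apply/(IHp r _ _ Hd1 Hd2) => //.
  - case: r Hw Hr => [//|r] [H1 [H2 [H3 H4]]] Hr; split.
    + move=> H e; have [d [Hd1 Hd2]] := H2 e; apply/(IHp r _ _ Hd1 Hd2) => //.
    + move=> H d; have [e [He1 He2]] := H1 d; apply/(IHp r _ _ He1 He2) => //.
  - case: r Hw Hr => [//|r] [H1 [H2 [H3 H4]]] Hr; split.
    + move=> HX; have [Y [HY HYX]] := H3 _ HX; apply: inf_subset HY => e /HYX [d [Xd [Hd1 Hd2]]].
      by apply/(IHp r _ _ Hd1 Hd2).
    + move=> HY; have [X [HX HXY]] := H4 _ HY; apply: inf_subset HX => d /HXY [e [Ye [He1 He2]]].
      by apply/(IHp r _ _ He1 He2).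
  - case: r Hw Hr => [//|r] [H1 [H2 [H3 H4]]] Hr; split.
    + move=> Hf; apply: NNPP => HY; have [X [HX HXY]] := H4 _ HY; apply: HX.
      apply: fin_subset Hf => d /HXY [e [Ye [He1 He2]]] Hs; apply: Ye.
      by apply/(IHp r _ _ He1 He2).
    + move=> Hf; apply: NNPP => HX; have [Y [HY HYX]] := H3 _ HX; apply: HY.
      apply: fin_subset Hf => e /HYX [d [Xd [Hd1 Hd2]]] Hs; apply: Xd.
      by apply/(IHp r _ _ Hd1 Hd2).
Qed.

End Sat.

Section Forms.
Variable A : finType.
Implicit Types M N : model A.

Definition tyf (S : {set A}) : form A :=
  foldr (fun a p => FAnd (if a \in S then FAtom a 0 else FNAtom a 0) p) FTrue (index_enum A).

Lemma tyf_sat M env d S : sat M (d :: env) (tyf S) <-> of_type M S d.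
Proof.
  have gen : forall l, sat M (d :: env)
      (foldr (fun a p => FAnd (if a \in S then FAtom a 0 else FNAtom a 0) p) FTrue l)
      <-> forall a, In a l -> (pval M a d <-> a \in S).
  { elim=> [|a l IH] /=; first by split => // _ a [].
    rewrite IH; case Has: (a \in S) => /=; split.
    - move=> [Ha H] b [<-|Hb]; [by rewrite Has; split | exact: H].
    - move=> H; split; [by apply/(H a (or_introl erefl)); rewrite Has | move=> b Hb; apply: H; by right].
    - move=> [Ha H] b [<-|Hb]; [by rewrite Has; split | exact: H].
    - move=> H; split; last by move=> b Hb; apply: H; right.
      move=> Hp; have := proj1 (H a (or_introl erefl)) Hp; by rewrite Has. }
  rewrite /tyf gen; split; [move=> H a; apply: H; apply: inseqP; exact: mem_index_enum | by move=> H a _].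
Qed.

Lemma wf_tyf n S : wf n.+1 (tyf S).
Proof. rewrite /tyf; elim: (index_enum A) => [|a l IH] //=; rewrite IH; by case: (a \in S). Qed.

Lemma qrank_tyf S : qrank (tyf S) = 0.
Proof. rewrite /tyf; elim: (index_enum A) => [|a l IH] //=; rewrite IH; by case: (a \in S). Qed.

Fixpoint neqs (m : nat) : form A :=
  match m with 0 => FTrue | i.+1 => FAnd (@FNeq A 0 i.+1) (neqs i) end.

Lemma wf_neqs n m : m <= n -> wf n.+1 (neqs m).
Proof. elim: m => [|m IH] //= H; rewrite IH ?andbT //; lia. Qed.

Lemma qrank_neqs m : qrank (neqs m) = 0.
Proof. by elim: m => [|m IH] //=; rewrite IH. Qed.

Lemma neqs_sat M env d m : m <= length env ->
  (sat M (d :: env) (neqs m) <-> forall i, i < m -> nth_error env i <> Some d).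
Proof.
  elim: m => [|m IH] Hm /=; first by split => // _ i.
  rewrite IH; last lia.
  case E: (nth_error env m) => [e|]; last first.
  { exfalso; move/nth_error_None: E; lia. }
  split.
  - move=> [Hne H] i Hi; case: (ltngtP i m) => Him.
    + exact: H.
    + lia.
    + subst; rewrite E => -[Ed]; by apply: Hne.
  - move=> H; split; last by move=> i Hi; apply: H; lia.
    move=> Ed; apply: (H m) => //; by rewrite E Ed.
Qed.

Lemma neqs_In M env d : sat M (d :: env) (neqs (length env)) <-> ~ In d env.
Proof.
  rewrite neqs_sat //; split.
  - move=> H Hin; have [i Hi] := In_nth_error _ _ Hin; apply: (H i) => //.
    have : nth_error env i <> None by rewrite Hi.
    move/nth_error_Some; lia.
  - move=> H i _ Hi; apply: H; exact: nth_error_In Hi.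
Qed.

Fixpoint G (S : {set A}) (j m : nat) : form A :=
  match j with
  | 0 => FTrue
  | j'.+1 => FEx (FAnd (FAnd (tyf S) (neqs m)) (G S j' m.+1))
  end.

Lemma wf_G S j : forall m, wf m (G S j m).
Proof. elim: j => [|j IH] m //=; by rewrite wf_tyf wf_neqs // IH. Qed.

Lemma qrank_G S j : forall m, qrank (G S j m) = j.
Proof. elim: j => [|j IH] m //=; rewrite qrank_tyf qrank_neqs IH; lia. Qed.

Lemma G_sat M S j : forall env, sat M env (G S j (length env)) <->
  exists l, length l = j /\ NoDup l /\ forall x, In x l -> of_type M S x /\ ~ In x env.
Proof.
  elim: j => [|j IH] env /=.
  - split => // _; exists nil; split => //; split; [constructor | by []].
  - split.
    + move=> [d [[/tyf_sat Hd /neqs_In Hn] /(IH (d :: env)) [l [Hl [Hnd Hx]]]]].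
      exists (d :: l); split; first by rewrite /= Hl.
      split; first by constructor => // /Hx [_ []]; left.
      move=> x [<-|/Hx [Hx1 Hx2]]; first by split.
      split => // H; apply: Hx2; by right.
    + move=> [[|d l] [//= [Hl] [Hnd Hx]]].
      move/NoDup_cons_iff: Hnd => [Hdl Hnd].
      have [Hd1 Hd2] := Hx d (or_introl erefl).
      exists d; split; first by split; [apply/tyf_sat | apply/neqs_In].
      apply/(IH (d :: env)); exists l; split => //; split => // x Hxl.
      have [Hx1 Hx2] := Hx x (or_intror Hxl); split => //.
      case=> [E|//]; subst; exact: Hdl.
Qed.

Lemma G0_sat M S j n : card_is (of_type M S) n -> (sat M nil (G S j 0) <-> j <= n).
Proof.
  move=> Hc; rewrite -(atleast_card j Hc) (G_sat (M:=M) S j nil); split.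
  - move=> [l [H1 [H2 H3]]]; exists l; split => //; split => // x /H3 [] //.
  - move=> [l [H1 [H2 H3]]]; exists l; split => //; split => // x /H3 Hx; by split.
Qed.

Lemma inf_sat M S : sat M nil (FExInf (tyf S)) <-> infinite_pred (of_type M S).
Proof.
  rewrite /=; have -> // : (fun d => sat M (d :: nil) (tyf S)) = of_type M S.
  apply: pred_ext => d; exact: tyf_sat.
Qed.

Lemma rank_sim k M N : rank_equiv k M N -> sim_inf k M N.
Proof.
  case: k => [//|k] H S /=.
  have Hinf : infinite_pred (of_type M S) <-> infinite_pred (of_type N S).
  { rewrite -!inf_sat; apply: H; [exact: wf_tyf | by rewrite /= qrank_tyf]. }
  have Hcnt : forall j, j <= k.+1 -> (sat M nil (G S j 0) <-> sat N nil (G S j 0)).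
  { move=> j Hj; apply: H; [exact: wf_G | by rewrite qrank_G]. }
  case: (fin_or_inf (of_type M S)) => [[n Hn]|HP];
  case: (fin_or_inf (of_type N S)) => [[m Hm]|HQ].
  - have Hj : forall j, j <= k.+1 -> (j <= n <-> j <= m).
    { move=> j Hj; rewrite -(G0_sat j Hn) -(G0_sat j Hm); exact: Hcnt. }
    case: (ltnP n k.+1) => Hnk.
    + have h1 := Hj n.+1 Hnk. have h2 := Hj n (ltnW Hnk).
      have Enm : n = m.
      { have := proj1 h2 (leqnn n). case: (ltnP n m) => Hc; last lia.
        have := proj2 h1 Hc; lia. }
      left; exists n; split => //; split => //; by subst.
    + case: (ltnP m k.+1) => Hmk.
      * have h1 := Hj m.+1 Hmk. exfalso; have := proj1 h1 ltac:(lia); lia.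
      * right; left; exists n, m; by repeat split.
  - exfalso; apply: (card_not_inf Hn); exact/Hinf.
  - exfalso; apply: (card_not_inf Hm); exact/Hinf.
  - by right; right.
Qed.

End Forms.

Theorem proposition3p10 (A : finType) (k : nat) (M N : model A) :
  (rank_equiv k M N <-> sim_inf k M N) /\ (sim_inf k M N <-> E_wins k M N).
Proof.
  have piso0 : piso M N nil nil.
  { split => //; split => [[|i] [|j] ? ? ? ? //|[|i] ? ? //]. }
  have s2w : sim_inf k M N -> E_wins k M N.
  { rewrite /E_wins; case: k => [//|k] H; apply: strat => // S.
    have -> : U (M:=M) nil S = of_type M S by apply: pred_ext => x; rewrite /U /=; tauto.
    have -> : U (M:=N) nil S = of_type N S by apply: pred_ext => x; rewrite /U /=; tauto.
    exact: H. }
  have w2r : E_wins k M N -> rank_equiv k M N.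
  { move=> Hw p _ Hp; exact: game_sat piso0 Hw Hp. }
  split; split.
  - exact: rank_sim.
  - by move=> /s2w /w2r.
  - exact: s2w.
  - by move=> /w2r /rank_sim.
Qed.
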